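(* Let $X$ be a uniformly joinable uniform space with a countable base of entourages. If $f\colon X\to Y$ is a generalized uniform covering map, then every fiber $f^{-1}(y)$, $y\in Y$, is complete.
   Context: $f(E)=\{(f(x),f(y)):(x,y)\in E\}$; a surjection generates the uniform structure of its range if the sets $f(E)$ form a base of it. $R(X,E)$ is the Rips complex (vertex set $X$, simplices finite $F$ with $F\times F\subset E$); $e(x,y)$ the edge-path; $E$-chains are sequences with consecutive pairs in $E$, viewed as edge-paths. Paths $c,d$ in $R(X,E)$ with end-points in $X$ are $E$-homotopic if their initial points $x_c,x_d$ and terminal points $y_c,y_d$ satisfy $(x_c,x_d),(y_c,y_d)\in E$ and $c\simeq e(x_c,x_d)\ast d\ast e(y_d,y_c)$ rel. end-points in $R(X,E)$. A generalized path from $x$ to $y$ is a family $\{[c_E]\}_E$ of homotopy classes rel. end-points of paths from $x$ to $y$ in $R(X,E)$ with $c_F\simeq c_E$ in $R(X,E)$ for $F\subset E$; it is $F$-short if $(x,y)\in F$ and $c_F\simeq e(x,y)$ in $R(X,F)$; $c,d$ are $F$-homotopic if $c_F$ is $F$-homotopic to $d_F$. $\widetilde f(c)_F=[f_E(c_E)]$, $E=f^{-1}(F)$. Uniformly joinable: for each $E$ there is $F$ with every $(x,y)\in F$ joined by an $E$-short generalized path. A generalized uniform covering map is an $f\colon X\to Y$ generating the uniform structure of $Y$ with: GP1 (every generalized path in $Y$ from $f(x_0)$ is $\widetilde f(d)$ for some generalized path $d$ from $x_0$); GP2 (for each $E$ there is $F$ such that generalized paths with common origin are $E$-homotopic if their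 images under $\widetilde f$ are $f(F)$-homotopic); C1 (for each $E$ there is $F$ such that every $f(F)$-chain from $f(x_0)$ lifts to an $E$-chain from $x_0$); C2 (for each $E$ there is $F$ such that $F$-chains with common origin are $E$-homotopic if their images are $f(F)$-homotopic). *)

(* Defs.v *)
From Stdlib Require Import List Relations.
Import ListNotations.
Set Implicit Arguments.

Definition rel (X : Type) := X -> X -> Prop.

Definition subrel {X} (E F : rel X) := forall x y, E x y -> F x y.

Record uniformity {X : Type} (U : rel X -> Prop) : Prop := {
  u_nonempty : exists E, U E;
  u_diag : forall E, U E -> forall x, E x x;
  u_up : forall E F, U E -> subrel E F -> U F;
  u_inter : forall E F, U E -> U F -> U (fun x y => E x y /\ F x y);
  u_inv : forall E, U E -> U (fun x y => E y x);
  u_comp : forall E, U E -> exists F, U F /\ forall x y z, F x y -> F y z -> E x z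
}.

(** Symmetric entourages (they form a base; all indexing below is by them). *)
Definition sent {X} (U : rel X -> Prop) (E : rel X) : Prop :=
  U E /\ forall x y, E x y -> E y x.

Definition countable_base {X} (U : rel X -> Prop) : Prop :=
  exists B : nat -> rel X, (forall n, U (B n)) /\
    forall E, U E -> exists n, subrel (B n) E.

Definition img {X Y} (f : X -> Y) (E : rel X) : rel Y :=
  fun a b => exists x y, E x y /\ f x = a /\ f y = b.
Definition preim {X Y} (f : X -> Y) (F : rel Y) : rel X :=
  fun x y => F (f x) (f y).

Definition generates {X Y} (UX : rel X -> Prop) (UY : rel Y -> Prop)
  (f : X -> Y) : Prop :=
  (forall b, exists a, f a = b) /\
  (forall E, UX E -> UY (img f E)) /\
  (forall F, UY F -> exists E, UX E /\ subrel (img f E) F).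

(** E-chains from x to y, as lists [x; ...; y]; they are the edge-paths of
    the Rips complex R(X,E) (E symmetric). *)
Inductive chain {X} (E : rel X) : X -> X -> list X -> Prop :=
| ch_one x : chain E x x [x]
| ch_cons x y z l : E x y -> chain E y z l -> chain E x z (x :: l).

(** {a,b,c} is a simplex of R(X,E). *)
Definition simplex3 {X} (E : rel X) (a b c : X) : Prop :=
  E a b /\ E b a /\ E a c /\ E c a /\ E b c /\ E c b /\ E a a /\ E b b /\ E c c.

Inductive ehstep {X} (E : rel X) : list X -> list X -> Prop :=
| eh_tri l1 a b c l2 : simplex3 E a b c ->
    ehstep E (l1 ++ a :: b :: c :: l2) (l1 ++ a :: c :: l2)
| eh_dup l1 a l2 : ehstep E (l1 ++ a :: a :: l2) (l1 ++ a :: l2).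

(** Homotopy rel. end-points of edge-paths in R(X,E)
    (edge-path equivalence). *)
Definition ehom {X} (E : rel X) : list X -> list X -> Prop :=
  clos_refl_sym_trans _ (ehstep E).

(** Paths c (from xc to yc) and d (from xd to yd) are E-homotopic:
    (xc,xd),(yc,yd) in E and c ~ e(xc,xd) * d * e(yd,yc) in R(X,E). *)
Definition ehomotopic {X} (E : rel X) (xc yc : X) (c : list X)
  (xd yd : X) (d : list X) : Prop :=
  E xc xd /\ E yc yd /\ ehom E c (xc :: d ++ [yc]).

(** Generalized paths: a family, indexed by (symmetric) entourages E, of
    (representatives of) homotopy classes of paths from x to y in R(X,E). *)
Definition gpath {X} (U : rel X -> Prop) (x y : X) (c : rel X -> list X) : Prop :=
  (forall E, sent U E -> chain E x y (c E)) /\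
  (forall E F, sent U E -> sent U F -> subrel F E -> ehom E (c F) (c E)).

Definition gshort {X} (F : rel X) (x y : X) (c : rel X -> list X) : Prop :=
  F x y /\ ehom F (c F) [x; y].

Definition ghomotopic {X} (F : rel X) (x yc : X) (c : rel X -> list X)
  (yd : X) (d : rel X -> list X) : Prop :=
  ehomotopic F x yc (c F) x yd (d F).

Definition gmap {X Y} (f : X -> Y) (c : rel X -> list X) : rel Y -> list Y :=
  fun F => map f (c (preim f F)).

Definition geq {Y} (UY : rel Y -> Prop) (c d : rel Y -> list Y) : Prop :=
  forall F, sent UY F -> ehom F (c F) (d F).

Definition uniformly_joinable {X} (U : rel X -> Prop) : Prop :=
  forall E, sent U E -> exists F, sent U F /\
    forall x y, F x y -> exists c, gpath U x y c /\ gshort E x y c.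

Definition gen_uniform_covering {X Y} (UX : rel X -> Prop) (UY : rel Y -> Prop)
  (f : X -> Y) : Prop :=
  generates UX UY f /\
  (forall x0 y' d', gpath UY (f x0) y' d' ->
     exists x d, gpath UX x0 x d /\ geq UY (gmap f d) d') /\
  (forall E, sent UX E -> exists F, sent UX F /\
     forall x0 x1 x2 c d, gpath UX x0 x1 c -> gpath UX x0 x2 d ->
       ghomotopic (img f F) (f x0) (f x1) (gmap f c) (f x2) (gmap f d) ->
       ghomotopic E x0 x1 c x2 d) /\
  (forall E, sent UX E -> exists F, sent UX F /\
     forall x0 y' l', chain (img f F) (f x0) y' l' ->
       exists x l, chain E x0 x l /\ map f l = l') /\
  (forall E, sent UX E -> exists F, sent UX F /\
     forall x0 x1 x2 c d, chain F x0 x1 c -> chain F x0 x2 d ->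
       ehomotopic (img f F) (f x0) (f x1) (map f c) (f x0) (f x2) (map f d) ->
       ehomotopic E x0 x1 c x0 x2 d).

Definition pfilter {T} (Fl : (T -> Prop) -> Prop) : Prop :=
  Fl (fun _ => True) /\
  (forall A B, Fl A -> (forall x, A x -> B x) -> Fl B) /\
  (forall A B, Fl A -> Fl B -> Fl (fun x => A x /\ B x)) /\
  ~ Fl (fun _ => False).

Definition cauchy {T} (U : rel T -> Prop) (Fl : (T -> Prop) -> Prop) : Prop :=
  forall E, U E -> exists A, Fl A /\ forall x y, A x -> A y -> E x y.

Definition converges {T} (U : rel T -> Prop) (Fl : (T -> Prop) -> Prop) (x : T) : Prop :=
  forall E, U E -> Fl (fun z => E x z).

Definition complete {T} (U : rel T -> Prop) : Prop :=
  forall Fl, pfilter Fl -> cauchy U Fl -> exists x, converges U Fl x.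

Definition induced {X} (U : rel X -> Prop) (P : X -> Prop) : rel (sig P) -> Prop :=
  fun E' => exists E, U E /\ forall a b, E (proj1_sig a) (proj1_sig b) -> E' a b.

(* Main.v *)
Require Import Defs.
From Stdlib Require Import List Relations Arith Lia Classical ClassicalEpsilon.
Import ListNotations.

Lemma ehom_refl {X} (E : rel X) l : ehom E l l.
Proof. apply rst_refl. Qed.
Lemma ehom_sym {X} (E : rel X) l l' : ehom E l l' -> ehom E l' l.
Proof. apply rst_sym. Qed.
Lemma ehom_trans {X} (E : rel X) l l' l'' : ehom E l l' -> ehom E l' l'' -> ehom E l l''.
Proof. apply rst_trans. Qed.
Lemma ehom_step {X} (E : rel X) l l' : ehstep E l l' -> ehom E l l'.
Proof. apply rst_step. Qed.

Lemma ehom_gen {X Z} (E : rel X) (F : rel Z) (g : list X -> list Z) :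
  (forall l l', ehstep E l l' -> ehom F (g l) (g l')) ->
  forall l l', ehom E l l' -> ehom F (g l) (g l').
Proof.
  intros H l l' h; induction h.
  - apply H; auto.
  - apply ehom_refl.
  - apply ehom_sym; auto.
  - eapply ehom_trans; eauto.
Qed.

Lemma ehom_mono {X} (E F : rel X) : subrel E F -> forall l l', ehom E l l' -> ehom F l l'.
Proof.
  intro s; apply (ehom_gen _ _ (fun l => l)); intros l l' h; apply ehom_step.
  destruct h as [l1 a b c l2 hs|l1 a l2].
  - apply eh_tri. unfold simplex3 in *; intuition.
  - apply eh_dup.
Qed.

Lemma ehom_app_l {X} (E : rel X) p l l' : ehom E l l' -> ehom E (p ++ l) (p ++ l').
Proof.
  apply (ehom_gen _ _ (fun l => p ++ l)); intros l0 l0' h; apply ehom_step.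
  destruct h as [l1 a b c l2 hs|l1 a l2]; rewrite !app_assoc.
  - apply eh_tri; auto.
  - apply eh_dup.
Qed.

Lemma ehom_app_r {X} (E : rel X) q l l' : ehom E l l' -> ehom E (l ++ q) (l' ++ q).
Proof.
  apply (ehom_gen _ _ (fun l => l ++ q)); intros l0 l0' h; apply ehom_step.
  destruct h as [l1 a b c l2 hs|l1 a l2]; rewrite <- !app_assoc; simpl.
  - apply eh_tri; auto.
  - apply eh_dup.
Qed.

Lemma ehom_map {X Y} (f : X -> Y) (E : rel X) (F : rel Y) :
  (forall u v, E u v -> F (f u) (f v)) ->
  forall l l', ehom E l l' -> ehom F (map f l) (map f l').
Proof.
  intro hF; apply (ehom_gen _ _ (map f)); intros l l' h; apply ehom_step.
  destruct h as [l1 a b c l2 hs|l1 a l2]; rewrite !map_app; simpl.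
  - apply eh_tri. unfold simplex3 in *; intuition.
  - apply eh_dup.
Qed.

Lemma last_app_ne {X} (l1 m : list X) z : m <> [] -> last (l1 ++ m) z = last m z.
Proof.
  intro hm; induction l1 as [|a l1 IH]; simpl; auto.
  rewrite IH. destruct l1; simpl; destruct m; auto; congruence.
Qed.

Lemma ehom_last {X} (E : rel X) l l' z : ehom E l l' -> last l z = last l' z.
Proof.
  intro h; induction h as [l l' h| | | l1 l2 l3 _ IH1 _ IH2]; auto; try congruence.
  destruct h as [l1 a b c l2 hs|l1 a l2];
    rewrite !last_app_ne by discriminate; reflexivity.
Qed.

Lemma chain_last {X} (E : rel X) a b l : chain E a b l -> forall w, last l w = b.
Proof.
  induction 1 as [|x y z0 l h1 h2 IH]; intro w; simpl; auto.
  destruct l; [inversion h2| apply IH].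
Qed.

Lemma chain_head {X} (E : rel X) a b l : chain E a b l -> exists r, l = a :: r.
Proof. destruct 1; eauto. Qed.

Arguments chain_head {X E a b l}.

Lemma chain_snoc {X} (E : rel X) a b l : chain E a b l -> exists q, l = q ++ [b].
Proof.
  induction 1.
  - exists []; reflexivity.
  - destruct IHchain as [q ->]. exists (x :: q); reflexivity.
Qed.

Arguments chain_snoc {X E a b l}.

Lemma chain_app {X} (E : rel X) a b c l m :
  chain E a b l -> chain E b c m -> E b b -> chain E a c (l ++ m).
Proof.
  induction 1; intros hm hb; simpl.
  - destruct (chain_head hm) as [r ->]. apply ch_cons with x; auto.
  - apply ch_cons with y; auto.
Qed.

Lemma chain_map {X Y} (f : X -> Y) (E : rel X) (F : rel Y) :
  (forall u v, E u v -> F (f u) (f v)) ->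
  forall a b l, chain E a b l -> chain F (f a) (f b) (map f l).
Proof.
  intros hF a b l h; induction h; simpl.
  - apply ch_one.
  - apply ch_cons with (f y); auto.
Qed.

Lemma chain_loop {X} (E : rel X) a b p :
  chain E a b p -> ehom E p (a :: p ++ [b]).
Proof.
  intro h. destruct (chain_head h) as [r hr]. destruct (chain_snoc h) as [q hq].
  apply ehom_trans with (p ++ [b]).
  - rewrite hq, <- app_assoc. simpl. apply ehom_sym, ehom_step.
    exact (eh_dup E q b []).
  - rewrite hr. apply ehom_sym, ehom_step. exact (eh_dup E [] a (r ++ [b])).
Qed.

Lemma choice_fun {A B} (P : A -> B -> Prop) : (forall a, exists b, P a b) ->
  exists g : A -> B, forall a, P a (g a).
Proof.
  intro H. exists (fun a => proj1_sig (constructive_indefinite_description _ (H a))).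
  intro a; exact (proj2_sig (constructive_indefinite_description _ (H a))).
Qed.

Lemma sent_refl {X} (U : rel X -> Prop) E : uniformity U -> sent U E -> forall x, E x x.
Proof. intros hU [h _]; exact (u_diag hU _ h). Qed.

Lemma preim_sent {X Y} UX UY (f : X -> Y) : uniformity UX -> generates UX UY f ->
  forall F, sent UY F -> sent UX (preim f F).
Proof.
  intros hU [_ [_ hg]] F [hF hs]. destruct (hg F hF) as [E [hE hEF]]. split.
  - apply (u_up hU hE). intros a b h. apply hEF. exists a, b; auto.
  - intros a b; unfold preim; auto.
Qed.

Lemma img_sent {X Y} UX UY (f : X -> Y) : generates UX UY f ->
  forall G, sent UX G -> sent UY (img f G).
Proof.
  intros [_ [hi _]] G [hG hs]. split; auto.
  intros a b [u [v [h [<- <-]]]]. exists v, u; auto.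
Qed.

Lemma img_preim {X Y} (f : X -> Y) F u v : img f (preim f F) u v -> F u v.
Proof. intros [a [b [h [<- <-]]]]; exact h. Qed.

Theorem mainTheorem17 (X Y : Type) (UX : rel X -> Prop) (UY : rel Y -> Prop)
  (hUX : uniformity UX) (hUY : uniformity UY)
  (hcount : countable_base UX) (hjoin : uniformly_joinable UX)
  (f : X -> Y) (hf : gen_uniform_covering UX UY f) :
  forall y : Y, complete (@induced X UX (fun x : X => f x = y)).
Proof.
  intros y Fl [hT [hup [hint hne]]] hcau.
  destruct hf as [hgen [GP1 [GP2 _]]].
  destruct hcount as [B [hB hBbase]].
  set (E := fun n a b => forall k, k <= n -> B k a b /\ B k b a).
  assert (E_sent : forall n, sent UX (E n)).
  { intro n; split.
    2:{ intros a b h k hk; destruct (h k hk); auto. }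
    induction n.
    - apply (u_up hUX (u_inter hUX _ _ (hB 0) (u_inv hUX _ (hB 0)))).
      intros a b [h1 h2] k hk. assert (k = 0) by lia; subst; auto.
    - apply (u_up hUX (u_inter hUX _ _ IHn
              (u_inter hUX _ _ (hB (S n)) (u_inv hUX _ (hB (S n)))))).
      intros a b [h1 [h2 h3]] k hk.
      destruct (Nat.eq_dec k (S n)) as [->|hne']; auto.
      apply h1; lia. }
  assert (E_dec : forall n m, n <= m -> subrel (E m) (E n)).
  { intros n m hnm a b h k hk; apply h; lia. }
  assert (E_base : forall G, UX G -> exists n, subrel (E n) G).
  { intros G hG. destruct (hBbase G hG) as [n hn]. exists n.
    intros a b h; apply hn; apply (h n); lia. }
  destruct (choice_fun _ (fun n => hjoin (E n) (E_sent n))) as [Fj hFj].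
  set (D := fun n a b => E n a b /\ Fj n a b).
  assert (hA : forall n, exists A, Fl A /\ forall a b : {x | f x = y},
             A a -> A b -> D n (proj1_sig a) (proj1_sig b)).
  { intro n. apply hcau. exists (D n). split; auto.
    apply (u_inter hUX); [apply E_sent | apply (proj1 (hFj n))]. }
  destruct (choice_fun _ hA) as [A hA'].
  set (C := fun n z => forall k, k <= n -> A k z).
  assert (hC : forall n, Fl (C n)).
  { induction n.
    - apply (hup _ _ (proj1 (hA' 0))). intros z h k hk.
      assert (k = 0) by lia; subst; auto.
    - apply (hup _ _ (hint _ _ IHn (proj1 (hA' (S n))))).
      intros z [h1 h2] k hk. destruct (Nat.eq_dec k (S n)) as [->|?]; auto.
      apply h1; lia. }
  assert (hxs : forall n, exists z, C n z).
  { intro n. apply NNPP; intro hn. apply hne.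
    apply (hup _ _ (hC n)). intros z hz; apply hn; eauto. }
  destruct (choice_fun _ hxs) as [xs hxs'].
  set (xn := fun n => proj1_sig (xs n)).
  assert (hfx : forall n, f (xn n) = y) by (intro n; exact (proj2_sig (xs n))).
  assert (hD : forall k m, k <= m -> D k (xn k) (xn m)).
  { intros k m hkm. apply (proj2 (hA' k)); [apply (hxs' k) | apply (hxs' m)]; lia. }
  assert (hs : forall k, exists c, gpath UX (xn k) (xn (S k)) c /\ gshort (E k) (xn k) (xn (S k)) c).
  { intro k. apply (proj2 (hFj k)). apply (hD k (S k)); lia. }
  destruct (choice_fun _ hs) as [s hs'].
  set (cc := fix cc m := match m with 0 => fun _ : rel X => [xn 0]
                 | S m => fun G => cc m G ++ s m G end).
  assert (hcc : forall m, gpath UX (xn 0) (xn m) (cc m)).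
  { induction m; split.
    - intros G _; apply ch_one.
    - intros; apply ehom_refl.
    - intros G hG. simpl. apply chain_app with (xn m).
      + apply (proj1 IHm); auto.
      + apply (proj1 (proj1 (hs' m))); auto.
      + apply (sent_refl _ _ hUX hG).
    - intros G G' hG hG' hsub. simpl. apply ehom_trans with (cc m G ++ s m G').
      + apply ehom_app_r. apply (proj2 IHm); auto.
      + apply ehom_app_l. apply (proj2 (proj1 (hs' m))); auto. }
  assert (hpre : forall F, sent UY F -> sent UX (preim f F))
    by (intros F hF; apply (preim_sent UX UY f hUX hgen F hF)).
  assert (hchm : forall F n, sent UY F ->
     chain F y y (map f (cc n (preim f F)))).
  { intros F n hF.
    assert (h : chain F (f (xn 0)) (f (xn n)) (map f (cc n (preim f F)))).
    { apply chain_map with (preim f F); [intros u v h; exact h|].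
      apply (proj1 (hcc n)); auto. }
    rewrite !hfx in h; exact h. }
  assert (hstab : forall F, sent UY F -> forall n m, subrel (E n) (preim f F) -> n <= m ->
     ehom F (map f (cc m (preim f F))) (map f (cc n (preim f F)))).
  { intros F hF n m hn hnm. induction hnm as [|m0 hnm IH]; [apply ehom_refl|].
    apply ehom_trans with (map f (cc m0 (preim f F))); auto.
    set (G := preim f F).
    change (cc (S m0) G) with (cc m0 G ++ s m0 G). rewrite map_app.
    assert (hsub : subrel (E m0) G) by (intros a b h; apply hn, (E_dec n m0 hnm), h).
    assert (h1 : ehom G (s m0 G) [xn m0; xn (S m0)]).
    { apply ehom_trans with (s m0 (E m0)).
      - apply ehom_sym. apply (proj2 (proj1 (hs' m0))); auto. apply hpre; auto.
      - apply ehom_mono with (E m0); auto. apply (proj2 (proj2 (hs' m0))). }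
    assert (h2 : ehom F (map f (s m0 G)) [y; y]).
    { pose proof (ehom_map f G F (fun u v h => h) _ _ h1) as h3.
      simpl in h3; rewrite !hfx in h3; exact h3. }
    apply ehom_trans with (map f (cc m0 G) ++ [y; y]); [apply ehom_app_l; auto|].
    destruct (chain_snoc (hchm F m0 hF)) as [q hq]. fold G in hq. rewrite hq.
    rewrite <- app_assoc. simpl.
    apply ehom_trans with (q ++ [y; y]).
    - apply ehom_step. exact (eh_dup F q y [y]).
    - apply ehom_step. exact (eh_dup F q y []). }
  assert (hnF : forall F, exists n, sent UY F -> subrel (E n) (preim f F)).
  { intro F; destruct (classic (sent UY F)) as [h|h].
    - destruct (E_base _ (proj1 (hpre F h))) as [n hn]; exists n; auto.
    - exists 0; tauto. }
  destruct (choice_fun _ hnF) as [nF hnF'].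
  set (d' := fun F => map f (cc (nF F) (preim f F))).
  assert (hstab2 : forall F, sent UY F -> forall n, subrel (E n) (preim f F) ->
            ehom F (map f (cc n (preim f F))) (d' F)).
  { intros F hF n hn. apply ehom_trans with (map f (cc (max n (nF F)) (preim f F))).
    - apply ehom_sym, hstab; auto; lia.
    - apply hstab; auto; lia. }
  assert (hd' : gpath UY (f (xn 0)) (f (xn 0)) d').
  { split.
    - intros F hF. unfold d'. rewrite (hfx 0). apply hchm; auto.
    - intros F F' hF hF' hsub.
      apply ehom_trans with (map f (cc (nF F') (preim f F))).
      + apply (ehom_map f (preim f F) F (fun u v h => h)).
        apply (proj2 (hcc _)); auto. intros a b h; apply hsub; exact h.
      + apply hstab2; auto. intros a b h. apply hsub. apply (hnF' F' hF'); auto. }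
  destruct (GP1 _ _ _ hd') as [x [d [hd hgeq]]].
  assert (hfxx : f x = y).
  { set (F0 := img f (E 0)).
    assert (hF0 : sent UY F0) by apply (img_sent UX UY f hgen _ (E_sent 0)).
    pose proof (hgeq F0 hF0) as h. unfold gmap in h.
    apply (ehom_last _ _ _ y) in h.
    assert (c1 : chain F0 (f (xn 0)) (f x) (map f (d (preim f F0)))).
    { apply chain_map with (preim f F0); [intros u v hh; exact hh|].
      apply (proj1 hd); auto. }
    assert (c2 : chain F0 (f (xn 0)) (f (xn 0)) (d' F0)) by (apply (proj1 hd'); auto).
    rewrite (chain_last _ _ _ _ c1 y), (chain_last _ _ _ _ c2 y), hfx in h. exact h. }
  exists (exist _ x hfxx).
  intros E' [E0 [hE0 hE0']].
  destruct (u_comp hUX _ hE0) as [W [hW hWc]].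
  destruct (E_base _ hW) as [j hj].
  destruct (GP2 _ (E_sent j)) as [G [hG hGP]].
  set (H := img f G).
  assert (hH : sent UY H) by apply (img_sent UX UY f hgen _ hG).
  set (m := max (nF H) j).
  assert (hxm : E j x (xn m)).
  { assert (hg : ghomotopic (E j) (xn 0) x d (xn m) (cc m)).
    { apply hGP; auto.
      unfold ghomotopic, ehomotopic. fold H.
      split; [apply (sent_refl _ _ hUY hH)|].
      split; [rewrite hfxx, hfx; apply (sent_refl _ _ hUY hH)|].
      unfold gmap. apply ehom_trans with (d' H); [apply hgeq; auto|].
      apply ehom_trans with (map f (cc m (preim f H))).
      - apply ehom_sym, hstab2; auto.
        intros a b hh. apply (hnF' H hH). apply (E_dec (nF H) m (Nat.le_max_l _ _)); exact hh.
      - rewrite hfxx, <- (hfx m). apply chain_loop.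
        apply chain_map with (preim f H); [intros u v hh; exact hh|].
        apply (proj1 (hcc m)); auto. }
    destruct hg as [_ [h _]]; exact h. }
  apply (hup _ _ (proj1 (hA' j))). intros z hz. apply hE0'. simpl.
  apply (hWc _ (xn m)).
  - apply hj; exact hxm.
  - apply hj. apply (proj1 (proj2 (hA' j) (xs m) z (hxs' m j (Nat.le_max_r _ _)) hz)).
Qed.
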